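(* For every integer $k\geq1$, as identities of rational functions in the indeterminates $a,b,q$, $$\sum_{r=1}^{k}(-1)^{k-r}\sum_{\substack{k_1+\cdots+k_r=k\\ k_i\geq1}}\ \prod_{i=1}^{r}\prod_{j=1}^{k_i}\frac{a-bq^{j-1}}{1-q^j}=\prod_{i=1}^{k}\frac{aq^{i-1}-b}{1-q^i} \quad\text{and}\quad \sum_{r=1}^{k}(-1)^{k-r}\sum_{\substack{k_1+\cdots+k_r=k\\ k_i\geq1}}\ \prod_{i=1}^{r}\prod_{j=1}^{k_i}\frac{aq^{j-1}-b}{1-q^j}=\prod_{i=1}^{k}\frac{a-bq^{i-1}}{1-q^i},$$ where the inner sums run over all ordered $r$-tuples of positive integers with sum $k$. *)

(* Defs.v *)
From mathcomp Require Import all_boot all_algebra fraction.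
From mathcomp Require Import mpoly.
Set Implicit Arguments. Unset Strict Implicit. Unset Printing Implicit Defensive.
Import GRing.Theory.
Local Open Scope ring_scope.

Definition RF := {fraction {mpoly rat[3]}}.

Definition va : RF := tofrac ('X_(0 : 'I_3) : {mpoly rat[3]}).
Definition vb : RF := tofrac ('X_(1 : 'I_3) : {mpoly rat[3]}).
Definition vq : RF := tofrac ('X_(2 : 'I_3) : {mpoly rat[3]}).

Definition blockA (a b q : RF) (m : nat) : RF :=
  \prod_(1 <= j < m.+1) ((a - b * q ^+ (j - 1)) / (1 - q ^+ j)).

Definition blockB (a b q : RF) (m : nat) : RF :=
  \prod_(1 <= j < m.+1) ((a * q ^+ (j - 1) - b) / (1 - q ^+ j)).

Definition is_composition (k r : nat) (c : {ffun 'I_r -> 'I_k.+1}) : bool :=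
  [forall i, 0 < (c i : nat)]%N && (\sum_(i < r) (c i : nat) == k)%N.

Definition comp_sum (F : nat -> RF) (k : nat) : RF :=
  \sum_(1 <= r < k.+1)
    (-1) ^+ (k - r) *
    \sum_(c : {ffun 'I_r -> 'I_k.+1} | is_composition c)
      \prod_(i < r) F (c i : nat).

(* Main.v *)
Require Import Defs.
From mathcomp Require Import all_boot all_algebra fraction.
From mathcomp Require Import mpoly.
Import GRing.Theory.
Local Open Scope ring_scope.
From mathcomp Require Import ring zify.
Set Implicit Arguments. Unset Strict Implicit. Unset Printing Implicit Defensive.
Lemma conv0 (R : fieldType) (X Y x y : nat -> R) (q c : R) :
  (forall i, X i.+1 * (1 - q ^+ i.+1) = X i * x i) ->
  (forall i, Y i.+1 * (1 - q ^+ i.+1) = Y i * y i) ->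
  (forall i m, x i * (1 - q ^+ m) + (1 - q ^+ i) * y m = c * (1 - q ^+ (i + m))) ->
  forall n, c * (1 - q ^+ n) != 0 ->
  \sum_(i < n.+1) X i * ((-1) ^+ (n - i)%N * Y (n - i)%N) = 0.
Proof.
move=> hX hY hxy n cn.
pose W i := (-1) ^+ (n.+1 - i)%N * (X i * (1 - q ^+ i)) *
   (Y (n.+1 - i)%N * (1 - q ^+ (n.+1 - i)%N)).
have key : forall i, (i <= n)%N ->
   c * (1 - q ^+ n) * (X i * ((-1) ^+ (n - i)%N * Y (n - i)%N)) = W i.+1 - W i.
  move=> i le_in; rewrite /W subSS subSn // hX hY exprS.
  have -> : n = (i + (n - i)%N)%N by rewrite subnKC.
  rewrite addKn -hxy; ring.
set S := (\sum_(i < n.+1) _).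
suff h : c * (1 - q ^+ n) * S = 0.
  by move/eqP: h; rewrite mulf_eq0 (negbTE cn) /= => /eqP.
rewrite /S.
rewrite big_distrr /=.
rewrite (eq_bigr (fun i : 'I_n.+1 => W i.+1 - W i)); last first.
  by move=> i _; apply: key; rewrite -ltnS.
rewrite -(big_mkord xpredT (fun i => W i.+1 - W i)) telescope_sumr //.
by rewrite /W subnn subn0 !expr0 !subrr !mulr0 mul0r subrr.
Qed.
Definition cs (R : nzRingType) (F : nat -> R) (k : nat) : R :=
  \sum_(1 <= r < k.+1)
    (-1) ^+ (k - r) *
    \sum_(c : {ffun 'I_r -> 'I_k.+1} | is_composition c)
      \prod_(i < r) F (c i : nat).

Lemma cs_inner (R : comNzRingType) (F : nat -> R) k r :
  \sum_(c : {ffun 'I_r -> 'I_k.+1} | is_composition c) \prod_(i < r) F (c i : nat)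
  = ((\poly_(j < k.+1) (if (0 < j)%N then F j else 0)) ^+ r)`_k.
Proof.
set E := (fun j : nat => if (0 < j)%N then F j else 0).
set g := \poly_(j < k.+1) E j.
have -> : g ^+ r = \prod_(i < r) g by rewrite prodr_const card_ord.
rewrite /g poly_def bigA_distr_bigA /= coef_sum big_mkcond /=.
apply: eq_bigr => f _.
have -> : \prod_(i < r) (E (f i) *: 'X^(f i)) =
   (\prod_(i < r) E (f i)) *: 'X^(\sum_(i < r) (f i : nat)).
  rewrite -prodrXr -mul_polyC rmorph_prod -big_split /=.
  by apply: eq_bigr => i _; rewrite mul_polyC.
rewrite coefZ coefXn /is_composition.
have [allp|] := boolP [forall i, 0 < (f i : nat)]%N.
  rewrite /=; rewrite [in RHS](eq_bigr (fun i => F (f i))); last first.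
    by move=> i _; rewrite /E (forallP allp i).
  by rewrite eq_sym; case: eqP => _; rewrite ?mulr1 ?mulr0.
rewrite negb_forall => /existsP [i hi] /=.
rewrite (bigD1 i) //= /E (negbTE hi) mul0r mul0r //.
Qed.

Lemma coef_pow_low (R : nzRingType) (g : {poly R}) : g`_0 = 0 ->
  forall r n, (n < r)%N -> (g ^+ r)`_n = 0.
Proof.
move=> g0; elim=> [//|r IH] n hn.
rewrite exprS coefM big1 // => i _.
case: (posnP i) => [->|ip]; first by rewrite g0 mul0r.
by rewrite IH ?mulr0 //; move: ip hn (ltn_ord i); case: i => j /= _; lia.
Qed.

Lemma sign_sq (R : nzRingType) r : (-1) ^+ r * (-1) ^+ r = 1 :> R.
Proof. by rewrite -exprMn_comm ?mulrNN ?mulr1 ?expr1n //; exact: commrN1. Qed.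

Lemma cs_main (R : fieldType) (F G : nat -> R) k : (0 < k)%N ->
  F 0%N = 1 -> G 0%N = 1 ->
  (forall n, (0 < n <= k)%N ->
     \sum_(i < n.+1) F i * ((-1) ^+ (n - i)%N * G (n - i)%N) = 0) ->
  cs F k = G k.
Proof.
move=> hk hF0 hG0 hc.
set E := (fun j : nat => if (0 < j)%N then F j else 0).
set g := \poly_(j < k.+1) E j.
have g0 : g`_0 = 0 by rewrite coef_poly.
have gc : forall i, (i <= k)%N -> (1 + g)`_i = F i.
  move=> i hi; rewrite coefD coef1 coef_poly ltnS hi /E.
  by case: i hi => [|i] _ /=; rewrite ?hF0 ?add0r ?addr0.
set P := \poly_(i < k.+1) ((-1) ^+ i * G i).
set S := \sum_(r < k.+1) (- g) ^+ r.
have eS : (1 + g) * S = 1 - (- g) ^+ k.+1.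
  have h := subrX1 (- g) k.+1.
  have -> : 1 + g = - (- g - 1) by rewrite opprB opprK.
  by rewrite mulNr -h opprB.
have eP : forall n, (n <= k)%N -> ((1 + g) * P)`_n = (n == 0%N)%:R.
  move=> n hn; rewrite coefM.
  rewrite (eq_bigr (fun i : 'I_n.+1 => F i * ((-1) ^+ (n - i)%N * G (n - i)%N))).
    case: (posnP n) => [->|np]; first by rewrite big_ord1 hF0 hG0 !mul1r.
    by rewrite hc ?np ?hn // (gtn_eqF np).
  move=> i _; rewrite gc; last by have := ltn_ord i; lia.
  by rewrite coef_poly; have -> : ((n - i)%N < k.+1)%N by lia.
set D := S - P.
have eD : forall n, (n <= k)%N -> ((1 + g) * D)`_n = 0.
  move=> n hn; rewrite mulrBr coefB eS eP // coefB coef1.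
  rewrite coef_pow_low; [by rewrite subr0 subrr | by rewrite coefN g0 oppr0 | lia].
have step : forall m, (m <= k)%N -> (forall j, (j < m)%N -> D`_j = 0) -> D`_m = 0.
  move=> m hm IH; have := eD m hm; rewrite coefM big_ord_recl /=.
  rewrite big1 ?addr0 ?gc // ?hF0 ?subn0 ?mul1r // => i _.
  move: (ltn_ord i); case: i => j /= ?; rewrite IH ?mulr0 // /bump /=; lia.
have allD : forall N m, (m <= N)%N -> (m <= k)%N -> D`_m = 0.
  elim=> [|N IHN] m hmN hmk; apply: step => // j hj; [exfalso; lia | apply: IHN; lia].
have Sk : S`_k = (-1) ^+ k * G k.
  have := allD k k (leqnn k) (leqnn k); rewrite coefB => /eqP; rewrite subr_eq0 => /eqP ->.
  by rewrite coef_poly ltnSn.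
have Sk2 : S`_k = \sum_(1 <= r < k.+1) (-1) ^+ r * (g ^+ r)`_k.
  rewrite /S coef_sum -(big_mkord xpredT (fun r => ((- g) ^+ r)`_k)) big_ltn //.
  rewrite expr0 coef1 (gtn_eqF hk) add0r.
  by apply: eq_bigr => r _; rewrite -scaleN1r exprZn coefZ.
have -> : cs F k = (-1) ^+ k * ((-1) ^+ k * G k).
  rewrite -Sk Sk2 /cs mulr_sumr; apply: eq_big_nat => r /andP [r1 rk].
  rewrite cs_inner -/E -/g mulrA.
  have -> : (-1) ^+ k = (-1) ^+ (k - r)%N * (-1) ^+ r :> R by rewrite -exprD subnK //; lia.
  by rewrite -(mulrA _ ((-1) ^+ r)) sign_sq mulr1.
by rewrite mulrA sign_sq mul1r.
Qed.

Lemma blockA_S (a b q : RF) i :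
  blockA a b q i.+1 = blockA a b q i * ((a - b * q ^+ i) / (1 - q ^+ i.+1)).
Proof. by rewrite /blockA big_nat_recr //= subSS subn0. Qed.

Lemma blockB_S (a b q : RF) i :
  blockB a b q i.+1 = blockB a b q i * ((a * q ^+ i - b) / (1 - q ^+ i.+1)).
Proof. by rewrite /blockB big_nat_recr //= subSS subn0. Qed.

Lemma va_vb : va - vb != 0.
Proof.
rewrite /va /vb -rmorphB tofrac_eq0; apply/eqP => h.
have := congr1 (meval (fun i : 'I_3 => ((i : nat)%:R : rat))) h.
rewrite mevalB !mevalXU meval0 /= => /eqP.
by rewrite sub0r oppr_eq0 oner_eq0.
Qed.

Lemma vq_ne n : (0 < n)%N -> 1 - vq ^+ n != 0.
Proof.
move=> hn; have -> : 1 - vq ^+ n = tofrac (1 - ('X_(2 : 'I_3) : {mpoly rat[3]}) ^+ n).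
  by rewrite rmorphB rmorph1 rmorphXn.
rewrite tofrac_eq0; apply/eqP => h.
have := congr1 (mcoeff 0%MM) h.
rewrite mcoeffB mcoeff1 mcoeffXn mcoeff0 eqxx -mdeg_eq0 mdegMn mdeg1 mul1n.
by rewrite (gtn_eqF hn) subr0 => /eqP; rewrite oner_eq0.
Qed.

Lemma hxy1g (R : comNzRingType) (a b q : R) i m :
  (a - b * q ^+ i) * (1 - q ^+ m) + (1 - q ^+ i) * (a * q ^+ m - b)
   = (a - b) * (1 - q ^+ (i + m)).
Proof. by rewrite exprD; ring. Qed.

Lemma hxy2g (R : comNzRingType) (a b q : R) i m :
  (a * q ^+ i - b) * (1 - q ^+ m) + (1 - q ^+ i) * (a - b * q ^+ m)
   = (a - b) * (1 - q ^+ (i + m)).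
Proof. by rewrite exprD; ring. Qed.

Theorem mainTheorem14 (k : nat) (hk : (1 <= k)%N) :
  comp_sum (blockA va vb vq) k
    = \prod_(1 <= i < k.+1) ((va * vq ^+ (i - 1) - vb) / (1 - vq ^+ i))
  /\
  comp_sum (blockB va vb vq) k
    = \prod_(1 <= i < k.+1) ((va - vb * vq ^+ (i - 1)) / (1 - vq ^+ i)).
Proof.
have hxy1 := hxy1g va vb vq.
have hxy2 := hxy2g va vb vq.
have hA : forall i, blockA va vb vq i.+1 * (1 - vq ^+ i.+1) = blockA va vb vq i * (va - vb * vq ^+ i).
  by move=> i; rewrite blockA_S -mulrA mulfVK // vq_ne.
have hB : forall i, blockB va vb vq i.+1 * (1 - vq ^+ i.+1) = blockB va vb vq i * (va * vq ^+ i - vb).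
  by move=> i; rewrite blockB_S -mulrA mulfVK // vq_ne.
have hA0 : blockA va vb vq 0 = 1 by rewrite /blockA big_geq.
have hB0 : blockB va vb vq 0 = 1 by rewrite /blockB big_geq.
have h1 : cs (blockA va vb vq) k = blockB va vb vq k.
  apply: (cs_main hk hA0 hB0) => n /andP [n0 nk].
  exact: (@conv0 _ _ _ (fun i => va - vb * vq ^+ i) (fun m => va * vq ^+ m - vb)
     vq (va - vb) hA hB hxy1 n (mulf_neq0 va_vb (vq_ne n0))).
have h2 : cs (blockB va vb vq) k = blockA va vb vq k.
  apply: (cs_main hk hB0 hA0) => n /andP [n0 nk].
  exact: (@conv0 _ _ _ (fun i => va * vq ^+ i - vb) (fun m => va - vb * vq ^+ m)
     vq (va - vb) hB hA hxy2 n (mulf_neq0 va_vb (vq_ne n0))).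
have e1 : comp_sum (blockA va vb vq) k = cs (blockA va vb vq) k by [].
have e2 : comp_sum (blockB va vb vq) k = cs (blockB va vb vq) k by [].
rewrite e1 e2 h1 h2.
by split.
Qed.
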